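(* Fix a sequence of matchings $\mathcal{M}=\langle \mathbf{M}^{(1)}, \mathbf{M}^{(2)}, \ldots \rangle$ of a graph $G$ with $n$ nodes and consider the discrete protocol with these matchings. For any non-negative integers $K,\alpha,t$ with $1 \leq \alpha \leq K$, \[ \max_{ y \in \mathbb{Z}^n ,\ \operatorname{disc}(y) \leq K} \Pr\left[ x_{\max}^{(t)} \geq \lfloor \overline{x} \rfloor + \alpha \,\Big|\, x^{(0)} = y \right] \leq \max_{ y \in \mathbb{Z}^n,\ \operatorname{disc}(y) \leq K} \Pr\left[x_{\min}^{(t)} \leq \lfloor \overline{x} \rfloor - \alpha + 3 \,\Big|\, x^{(0)} = y \right], \] and similarly \[ \max_{ y \in \mathbb{Z}^n,\ \operatorname{disc}(y) \leq K} \Pr\left[ x_{\min}^{(t)} \leq \lfloor \overline{x} \rfloor - \alpha \,\Big|\, x^{(0)} = y \right] \leq \max_{ y \in \mathbb{Z}^n,\ \operatorname{disc}(y) \leq K} \Pr\left[x_{\max}^{(t)} \geq \lfloor \overline{x} \rfloor + \alpha - 3 \,\Big|\, x^{(0)} = y \right]. \]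
   Context: Discrete protocol with random orientation: $x^{(t)}\in\mathbb{Z}^n$ is the load vector at the end of round $t$; in round $t$, for each $\{u,v\}\in\mathbf{M}^{(t)}$ both $u,v$ get $\lfloor (x^{(t-1)}_u+x^{(t-1)}_v)/2\rfloor$ tokens and the excess token (if the sum is odd) goes to $u$ or $v$ with probability $1/2$ each, independently over edges and rounds; unmatched nodes keep their load. $\overline{x}=\frac1n\sum_w x^{(0)}_w$ is the average load (of the initial vector $y$), $x^{(t)}_{\max}=\max_u x^{(t)}_u$, $x^{(t)}_{\min}=\min_u x^{(t)}_u$, and $\operatorname{disc}(y)=\max_{u,v}|y_u-y_v|$. The probability is over the random orientations. *)

(* Defs.v *)
From mathcomp Require Import all_boot all_order all_algebra.
Set Implicit Arguments. Unset Strict Implicit. Unset Printing Implicit Defensive.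
Import Order.TTheory GRing.Theory Num.Theory.
Local Open Scope ring_scope.

Section Defs.
Variable n : nat.

Definition simple_graph (G : rel 'I_n) : Prop :=
  (forall u v, G u v = G v u) /\ (forall u, ~~ G u u).

(* A matching is encoded by its partner function: m u = u means u is
   unmatched, otherwise {u, m u} is an edge of the matching. *)
Definition is_matching (G : rel 'I_n) (m : 'I_n -> 'I_n) : Prop :=
  forall u, m (m u) = u /\ (m u != u -> G u (m u)).

(* One round of the discrete protocol with random orientation.
   c : 'I_n -> bool are the coins of the round; the coin of the edge {u,v}
   is the coin of its smaller endpoint min(u,v): if it is true the excess
   token goes to the smaller endpoint, otherwise to the larger one.
   Since distinct edges have distinct smaller endpoints, the edge coins are
   independent fair coins. *)
Definition step (m : 'I_n -> 'I_n) (c : 'I_n -> bool) (x : 'I_n -> int)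
  : 'I_n -> int := fun u =>
  let v := m u in
  if v == u then x u else
  let s := x u + x v in
  (s %/ 2)%Z + (if ((s %% 2)%Z == 1) && (if (u < v)%N then c u else ~~ c v)
                then 1 else 0).

Definition Omega (t : nat) := {ffun 'I_t * 'I_n -> bool}.

Definition coin (t : nat) (w : Omega t) (k : nat) (u : 'I_n) : bool :=
  if @insub nat (fun i => (i < t)%N) 'I_t k is Some i then w (i, u) else false.

(* load M t w y k = x^{(k)} for the run with initial vector y and coin
   outcome w; round k (k >= 1) uses the matching M k and the coins of
   index k-1. *)
Fixpoint load (M : nat -> 'I_n -> 'I_n) (t : nat) (w : Omega t)
  (y : 'I_n -> int) (k : nat) : 'I_n -> int :=
  match k with
  | 0 => y
  | k'.+1 => step (M k) (coin w k') (load M w y k')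
  end.

Definition Pr (t : nat) (E : pred (Omega t)) : rat :=
  #|[set w | E w]|%:R / #|[set: Omega t]|%:R.

Definition xmax (x : 'I_n -> int) : int :=
  if [pick u : 'I_n] is Some u0 then \big[Num.max/x u0]_u x u else 0.
Definition xmin (x : 'I_n -> int) : int :=
  if [pick u : 'I_n] is Some u0 then \big[Num.min/x u0]_u x u else 0.

Definition disc (y : 'I_n -> int) : nat :=
  (\max_(p : 'I_n * 'I_n) `|y p.1 - y p.2|%N)%N.

Definition floor_avg (y : 'I_n -> int) : int := ((\sum_u y u) %/ n%:Z)%Z.

End Defs.

(* Main.v *)
Require Import Defs.
From mathcomp Require Import all_boot all_order all_algebra.
From mathcomp Require Import zify.
Import Order.TTheory GRing.Theory Num.Theory.
Set Implicit Arguments. Unset Strict Implicit.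
Local Open Scope ring_scope.

Section Helpers.
Variable n : nat.

Definition cw (t : nat) (w : Omega n t) : Omega n t := [ffun p => ~~ w p].

Lemma cwK t : involutive (@cw t).
Proof. by move=> w; apply/ffunP=> p; rewrite !ffunE negbK. Qed.

Lemma coin_cw t (w : Omega n t) k u : (k < t)%N ->
  coin (cw w) k u = ~~ coin w k u.
Proof.
move=> kt; rewrite /coin; case: insubP => [i _ _|]; first by rewrite ffunE.
by rewrite kt.
Qed.

Lemma step_opp (m : 'I_n -> 'I_n) (c c' : 'I_n -> bool) (x : 'I_n -> int) :
  (forall u, c' u = ~~ c u) ->
  step m c' (fun u => - x u) =1 (fun u => - step m c x u).
Proof.
move=> hc u; rewrite /step.
case: eqP => // _.
rewrite !hc.
set b := (if (u < m u)%N then c u else ~~ c (m u)).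
have -> : (if (u < m u)%N then ~~ c u else ~~ ~~ c (m u)) = ~~ b.
  by rewrite /b; case: ifP.
set s := x u + x (m u).
have -> : - x u + - x (m u) = - s by rewrite /s opprD.
have [h1|h1] := eqVneq (s %% 2)%Z 1; have [h2|h2] := eqVneq ((- s) %% 2)%Z 1;
  rewrite ?h1 ?h2 /=; case: b => /=; move: h1 h2; rewrite ?eqxx => h1 h2; lia.
Qed.

Lemma step_ext (m : 'I_n -> 'I_n) c (x x' : 'I_n -> int) :
  x =1 x' -> step m c x =1 step m c x'.
Proof. by move=> h u; rewrite /step !h. Qed.

Lemma load_opp M t (w : Omega n t) y k : (k <= t)%N ->
  load M (cw w) (fun u => - y u) k =1 (fun u => - load M w y k u).
Proof.
elim: k => [|k IH] kt u //=.
rewrite (step_ext _ _ (IH (ltnW kt))).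
by apply: step_opp => v; rewrite coin_cw.
Qed.

Lemma xmax_opp (x : 'I_n -> int) : xmax (fun u => - x u) = - xmin x.
Proof.
rewrite /xmax /xmin; case: pickP => [u0 _|] //.
by rewrite (big_morph _ (@oppr_min _) (erefl _)).
Qed.

Lemma xmin_opp (x : 'I_n -> int) : xmin (fun u => - x u) = - xmax x.
Proof.
rewrite /xmax /xmin; case: pickP => [u0 _|] //.
by rewrite (big_morph _ (@oppr_max _) (erefl _)).
Qed.

Lemma disc_opp (y : 'I_n -> int) : disc (fun u => - y u) = disc y.
Proof.
by rewrite /disc; apply: eq_bigr => p _; rewrite -opprD abszN.
Qed.

Lemma floor_avg_opp (y : 'I_n -> int) : (0 < n)%N ->
  - floor_avg y - 1 <= floor_avg (fun u => - y u) <= - floor_avg y.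
Proof.
move=> n0; rewrite /floor_avg.
rewrite sumrN.
set S := \sum_u y u.
have hn : (0 < n%:Z) by rewrite ltz_nat.
have e1 := divz_eq S n%:Z; have e2 := divz_eq (- S) n%:Z.
have a1 := ltz_pmod S hn; have a2 := ltz_pmod (- S) hn.
have b1 := modz_ge0 S (lt0r_neq0 hn); have b2 := modz_ge0 (- S) (lt0r_neq0 hn).
move: e1 e2 a1 a2 b1 b2 hn.
set q1 := (S %/ n)%Z; set q2 := (- S %/ n)%Z.
set r1 := (S %% n)%Z; set r2 := (- S %% n)%Z.
move=> e1 e2 a1 a2 b1 b2 hn.
nia.
Qed.

Lemma Pr_le t (E1 E2 : pred (Omega n t)) :
  (forall w, E1 w -> E2 (cw w)) -> Pr E1 <= Pr E2.
Proof.
move=> h; rewrite /Pr ler_pM2r ?invr_gt0 ?ltr0n; last first.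
  by apply/card_gt0P; exists (cw [ffun=> false]); rewrite inE.
rewrite ler_nat.
rewrite -(card_preimset [set w | E2 w] (can_inj (@cwK t))).
apply: subset_leq_card; apply/subsetP => w; rewrite !inE; exact: h.
Qed.
End Helpers.

Theorem lemma2p7 (n : nat) (G : rel 'I_n) (M : nat -> 'I_n -> 'I_n)
  (K alpha t : nat) :
  (0 < n)%N -> simple_graph G -> (forall k, is_matching G (M k)) ->
  (1 <= alpha <= K)%N ->
  (forall y : 'I_n -> int, (disc y <= K)%N ->
     exists2 y' : 'I_n -> int, (disc y' <= K)%N &
       Pr (fun w : Omega n t => floor_avg y + alpha%:Z <= xmax (load M w y t))
       <= Pr (fun w : Omega n t =>
                xmin (load M w y' t) <= floor_avg y' - alpha%:Z + 3))
  /\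
  (forall y : 'I_n -> int, (disc y <= K)%N ->
     exists2 y' : 'I_n -> int, (disc y' <= K)%N &
       Pr (fun w : Omega n t => xmin (load M w y t) <= floor_avg y - alpha%:Z)
       <= Pr (fun w : Omega n t =>
                floor_avg y' + alpha%:Z - 3 <= xmax (load M w y' t))).
Proof.
move=> n0 _ _ _; split=> y dy; exists (fun u => - y u); rewrite ?disc_opp //;
  apply: Pr_le => w /=;
  have := floor_avg_opp y n0;
  have eq1 := load_opp M w y (leqnn t).
- have -> : xmin (load M (cw w) (fun u => - y u) t) =
            xmin (fun u => - load M w y t u).
    by rewrite /xmin; case: pickP => // u0 _; rewrite (eq_bigr _ (fun i _ => eq1 i)) eq1.
  rewrite xmin_opp; set A := floor_avg _; set B := floor_avg _; set X := xmax _.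
  move=> /andP[h1 h2] h3; lia.
- have -> : xmax (load M (cw w) (fun u => - y u) t) =
            xmax (fun u => - load M w y t u).
    by rewrite /xmax; case: pickP => // u0 _; rewrite (eq_bigr _ (fun i _ => eq1 i)) eq1.
  rewrite xmax_opp; set A := floor_avg _; set B := floor_avg _; set X := xmin _.
  move=> /andP[h1 h2] h3; lia.
Qed.
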